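(* Let $M$ be a complex manifold, $m\ge 1$, and let $\varphi_0,\dots,\varphi_m$ be smooth homogeneous complex-valued differential forms on $M$ of degrees $|\varphi_0|,\dots,|\varphi_m|$. Then $$ d\,\omega_m(\varphi_0,\dots,\varphi_m)=(-1)^m\,\partial\varphi_0\wedge\dots\wedge\partial\varphi_m+\overline\partial\varphi_0\wedge\dots\wedge\overline\partial\varphi_m+\frac{1}{m!}\,\mathrm{Alt}_{m+1}\Big((-1)^{|\varphi_0|}\,\overline\partial\partial\varphi_0\wedge\omega_{m-1}(\varphi_1,\dots,\varphi_m)\Big). $$
   Context: Here $d=\partial+\overline\partial$. For homogeneous forms $f_1,\dots,f_n$ and an expression $F(f_1,\dots,f_n)$ set $\mathrm{Alt}_nF(f_1,\dots,f_n):=\sum_{\sigma\in\Sigma_n}\mathrm{sgn}_{\sigma;f_1,\dots,f_n}F(f_{\sigma(1)},\dots,f_{\sigma(n)})$, where the sign of interchanging two of the forms $f_i,f_j$ is $(-1)^{(|f_i|+1)(|f_j|+1)}$ and the sign of a general permutation is the product of the signs of the transpositions composing it (i.e. the Koszul sign with respect to the shifted degrees $|f_i|+1$). Define $$ \omega_m(\varphi_0,\dots,\varphi_m):=\frac{1}{(m+1)!}\mathrm{Alt}_{m+1}\Big(\sum_{k=0}^m(-1)^k\varphi_0\wedge\partial\varphi_1\wedge\dots\wedge\partial\varphi_k\wedge\overline\partial\varphi_{k+1}\wedge\dots\wedge\overline\partial\varphi_m\Big), $$ with the alternation applied to the forms $\varphi_0,\dots,\varphi_m$ (not moving the differential operators);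 in particular $\omega_0(\varphi_0)=\varphi_0$. *)

(* Defs.v *)
From HB Require Import structures.
From mathcomp Require Import all_boot all_order all_algebra all_fingroup.
Set Implicit Arguments. Unset Strict Implicit. Unset Printing Implicit Defensive.
Import Order.TTheory GRing.Theory Num.Theory.
Local Open Scope ring_scope.

(* The algebra of smooth complex-valued differential forms on a complex
   manifold, abstracted: an R-algebra A (wedge product = ring product),
   with the predicate [homog p] of forms homogeneous of (total) degree p,
   and the operators del (= ∂) and delb (= ∂bar) satisfying the rules
   that hold for forms on any complex manifold. *)
Record cforms (R : numFieldType) (A : algType R) := CForms {
  homog : nat -> pred A;
  del : {linear A -> A};
  delb : {linear A -> A};
  hom0 : forall p, 0 \in homog p;
  homB : forall p x y, x \in homog p -> y \in homog p -> x - y \in homog p;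
  homZ : forall p (a : R) x, x \in homog p -> a *: x \in homog p;
  hom1 : 1 \in homog 0;
  homM : forall p q x y, x \in homog p -> y \in homog q -> x * y \in homog (p + q);
  hom_comm : forall p q x y, x \in homog p -> y \in homog q ->
    x * y = (-1) ^+ (p * q) *: (y * x);
  del_hom : forall p x, x \in homog p -> del x \in homog p.+1;
  delb_hom : forall p x, x \in homog p -> delb x \in homog p.+1;
  del_leibniz : forall p x y, x \in homog p ->
    del (x * y) = del x * y + (-1) ^+ p *: (x * del y);
  delb_leibniz : forall p x y, x \in homog p ->
    delb (x * y) = delb x * y + (-1) ^+ p *: (x * delb y);
  del_del : forall x, del (del x) = 0;
  delb_delb : forall x, delb (delb x) = 0;
  del_delb : forall x, del (delb x) + delb (del x) = 0
}.

Section Ops.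
Variables (R : numFieldType) (A : algType R) (D : cforms A).

Definition dtot (x : A) : A := del D x + delb D x.

(* Koszul sign of s with respect to the shifted degrees a i (= |f_i| + 1):
   product over inverted pairs of positions p < q (s p > s q) of
   (-1)^(a (s p) * a (s q)). *)
Definition koszul (n : nat) (a : 'I_n -> nat) (s : 'S_n) : R :=
  \prod_(p : 'I_n) \prod_(q : 'I_n | (p < q)%N && (s q < s p)%N)
     (-1) ^+ (a (s p) * a (s q)).

(* Alt_n F (f_1..f_n); the expression F may depend on the forms and on
   their degrees, k i being the degree of f i. *)
Definition Alt (n : nat) (F : ('I_n -> nat) -> ('I_n -> A) -> A)
    (k : 'I_n -> nat) (f : 'I_n -> A) : A :=
  \sum_(s : 'S_n) koszul (fun i => (k i).+1) s *:
      F (fun i => k (s i)) (fun i => f (s i)).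

Definition omega_term (m : nat) (j : nat) (f : 'I_m.+1 -> A) : A :=
  \prod_(i < m.+1)
     (if i == ord0 then f i else if (i <= j)%N then del D (f i) else delb D (f i)).

Definition omega (m : nat) (k : 'I_m.+1 -> nat) (f : 'I_m.+1 -> A) : A :=
  ((m.+1)`!%:R)^-1 *:
    Alt (fun _ g => \sum_(j < m.+1) (-1) ^+ j *: omega_term j g) k f.

End Ops.

(* Main.v *)
Require Import Defs.
From HB Require Import structures.
From mathcomp Require Import all_boot all_order all_algebra all_fingroup.
Import Order.TTheory GRing.Theory Num.Theory.
Local Open Scope ring_scope.
Set Implicit Arguments. Unset Strict Implicit. Unset Printing Implicit Defensive.
Section Kos.
Variable R : numFieldType.
Local Notation sgn e := ((-1 : R) ^+ e).
Local Notation kos := (koszul R).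

Lemma sgn_sq e : sgn e * sgn e = 1.
Proof. by rewrite -exprD -signr_odd oddD addbb. Qed.

Lemma koszul_sq n (a : 'I_n -> nat) s : kos a s * kos a s = 1.
Proof.
rewrite /koszul -big_split /=; apply: big1 => p _.
rewrite -big_split /=; apply: big1 => q _; exact: sgn_sq.
Qed.

Lemma perm_ltnN n (s : 'S_n) (p q : 'I_n) : p != q ->
  ~~ (s p < s q)%N = (s q < s p)%N.
Proof.
move=> npq; have nsq : (s q : nat) != s p by rewrite (inj_eq val_inj) (inj_eq perm_inj) eq_sym.
by rewrite -leqNgt leq_eqVlt (negbTE nsq).
Qed.

Lemma ltn_ordN n (p q : 'I_n) : (p < q)%N -> p != q.
Proof. by move=> h; apply/eqP => e; move: h; rewrite e ltnn. Qed.

Definition invb n (s : 'S_n) (p q : 'I_n) := (p < q)%N != (s p < s q)%N.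

Lemma invbC n s p q : @invb n s p q = invb s q p.
Proof.
rewrite /invb; case: (ltngtP p q) => [pq|qp|/val_inj->] //=.
- move: (perm_ltnN s (ltn_ordN pq)); by case: (s p < s q)%N; case: (s q < s p)%N.
- move: (perm_ltnN s (ltn_ordN qp)); by case: (s p < s q)%N; case: (s q < s p)%N.
Qed.

Definition Hf n (a : 'I_n -> nat) (s : 'S_n) (p q : 'I_n) : R :=
  if invb s p q then sgn (a (s p) * a (s q)) else 1.

Lemma koszulE n (a : 'I_n -> nat) s :
  kos a s = \prod_(p : 'I_n) \prod_(q : 'I_n | (p < q)%N) Hf a s p q.
Proof.
rewrite /koszul; apply: eq_bigr => p _; rewrite big_mkcondr /=.
apply: eq_bigr => q pq; rewrite /Hf /invb pq /=.
by rewrite (perm_ltnN _ (ltn_ordN pq)).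
Qed.

Lemma prod_sym n (F : 'I_n -> 'I_n -> R) (t : 'S_n) :
  (forall p q, F p q = F q p) ->
  \prod_(p : 'I_n) \prod_(q : 'I_n | (p < q)%N) F (t p) (t q) = \prod_(p : 'I_n) \prod_(q : 'I_n | (p < q)%N) F p q.
Proof.
move=> FC; rewrite !pair_big_dep /=.
rewrite [RHS](reindex_inj (h := fun pq : 'I_n * 'I_n => (t pq.1, t pq.2))) /=; last first.
  by move=> [p q] [p' q'] /= [/perm_inj-> /perm_inj->].
rewrite [RHS](bigID (fun pq : 'I_n * 'I_n => (pq.1 < pq.2)%N)) /=.
rewrite [LHS](bigID (fun pq : 'I_n * 'I_n => (t pq.1 < t pq.2)%N)) /=.
congr (_ * _); first by apply: eq_bigl => pq; rewrite andbC.
rewrite (reindex_inj (h := fun pq : 'I_n * 'I_n => (pq.2, pq.1))) /=; last first.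
  by move=> [p q] [p' q'] /= [-> ->].
apply: eq_big => [[p q]|[p q] _] /=; last exact: FC.
case: (ltngtP p q) => [pq|qp|/val_inj->]; rewrite ?ltnn ?andbF //=.
by rewrite andbT (perm_ltnN _ (ltn_ordN qp)).
Qed.

Lemma koszulM n (a : 'I_n -> nat) (r s : 'S_n) :
  kos a (r * s) = kos a s * kos (fun i => a (s i)) r.
Proof.
rewrite !koszulE mulrC.
have -> : \prod_(p : 'I_n) \prod_(q : 'I_n | (p < q)%N) Hf a (r * s) p q =
   \prod_(p : 'I_n) \prod_(q : 'I_n | (p < q)%N) (Hf (fun i => a (s i)) r p q * Hf a s (r p) (r q)).
  apply: eq_bigr => p _; apply: eq_bigr => q _.
  rewrite /Hf /invb !permM.
  case: (p < q)%N; case: (r p < r q)%N; case: (s (r p) < s (r q))%N => /=;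
    by rewrite ?mulr1 ?mul1r ?sgn_sq.
have -> : \prod_(p : 'I_n) \prod_(q : 'I_n | (p < q)%N) (Hf (fun i => a (s i)) r p q * Hf a s (r p) (r q))
  = (\prod_(p : 'I_n) \prod_(q : 'I_n | (p < q)%N) Hf (fun i => a (s i)) r p q) *
    \prod_(p : 'I_n) \prod_(q : 'I_n | (p < q)%N) Hf a s (r p) (r q).
  by rewrite -big_split /=; apply: eq_bigr => p _; rewrite -big_split.
congr (_ * _); apply: prod_sym => p q; by rewrite /Hf invbC mulnC.
Qed.

Lemma ltn_lift2 n (j : 'I_n.+1) (x y : 'I_n) : (lift j x < lift j y)%N = (x < y)%N.
Proof. by rewrite /= !ltnNge leq_bump2. Qed.

Lemma ltn_lift_l n (j : 'I_n.+1) (x : 'I_n) : (lift j x < j)%N = (x < j)%N.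
Proof. rewrite /= /bump; case: (leqP j x) => h /=; first by rewrite add1n ltnNge ltnW // ltnNge h. by rewrite add0n h. Qed.

Lemma koszul_lift n (a : 'I_n.+1 -> nat) (j : 'I_n.+1) (t : 'S_n) :
  kos a (lift_perm ord0 j t) =
  (\prod_(x : 'I_n | (x < j)%N) sgn (a j * a (lift j x))) * kos (fun x => a (lift j x)) t.
Proof.
rewrite /koszul big_ord_recl; congr (_ * _).
  rewrite big_mkcond big_ord_recl /= mul1r lift_perm_id.
  rewrite [RHS]big_mkcond [RHS](reindex_inj (@perm_inj _ t)) /=.
  by apply: eq_bigr => q _; rewrite lift_perm_lift ltn_lift_l.
apply: eq_bigr => p _; rewrite big_mkcond big_ord_recl /= mul1r.
rewrite [RHS]big_mkcond; apply: eq_bigr => q _.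
by rewrite !lift_perm_lift ltn_lift2 /bump !add1n ltnS.
Qed.

End Kos.

Lemma koszul1 (R : numFieldType) n (a : 'I_n -> nat) : koszul R a 1 = 1.
Proof.
apply: big1 => p _; apply: big1 => q /andP[pq]; rewrite !perm1.
by rewrite ltnNge ltnW.
Qed.

Lemma perm_lift_dec n (s : 'S_n.+1) : exists t, s = lift_perm ord0 (s ord0) t.
Proof.
pose ulsf (k : 'I_n) := odflt k (unlift (s ord0) (s (lift ord0 k))).
have ulsfK k: lift (s ord0) (ulsf k) = s (lift ord0 k).
  rewrite /ulsf; have:= neq_lift ord0 k.
  by rewrite -(can_eq (permK s)) => /unlift_some[] ? ? ->.
have inj_ulsf: injective ulsf.
  by move=> k1 k2 e; have := ulsfK k1; rewrite e ulsfK => /perm_inj/lift_inj ->.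
exists (perm inj_ulsf); apply/permP => k.
case: (unliftP ord0 k) => [k'|] ->; rewrite ?lift_perm_id //.
by rewrite lift_perm_lift permE ulsfK.
Qed.

Section Alg.
Variables (R : numFieldType) (A : algType R) (D : cforms A).
Local Notation sgn e := ((-1 : R) ^+ e).
Local Notation kos := (koszul R).
Local Notation hom := (homog D).

Lemma commute_prod (x : A) d (U : nat -> A) (B : nat -> nat) j :
  x \in hom d -> (forall i, U i \in hom (B i)) ->
  x * \prod_(0 <= i < j) U i =
  (\prod_(0 <= i < j) sgn (d * B i)) *: ((\prod_(0 <= i < j) U i) * x).
Proof.
move=> hx hU; elim: j => [|j IH]; first by rewrite !big_nil mulr1 mul1r scale1r.
rewrite !big_nat_recr //= mulrA IH -scalerAl -[_ * x * U j]mulrA (hom_comm hx (hU j)).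
by rewrite -scalerAr scalerA mulrA.
Qed.

Lemma insert_prod n (u : 'I_n.+1 -> A) (b : 'I_n.+1 -> nat) (j : 'I_n.+1) :
  (forall i, u i \in hom (b i)) ->
  u j * \prod_(i < n) u (lift j i) =
  (\prod_(x : 'I_n | (x < j)%N) sgn (b j * b (lift j x))) *: \prod_(i < n.+1) u i.
Proof.
move=> hu.
pose U (i : nat) := u (inord i); pose B (i : nat) := b (inord i).
have hU i : U i \in hom (B i) by apply: hu.
have liftE (i : 'I_n) : lift j i = inord (bump j i).
  by apply: val_inj; rewrite /= inordK //; exact: (ltn_ord (lift j i)).
have jn : (j <= n)%N by rewrite -ltnS.
have -> : \prod_(i < n) u (lift j i) = \prod_(0 <= i < n) U (bump j i).
  by rewrite big_mkord; apply: eq_bigr => i _; rewrite liftE.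
have -> : \prod_(i < n.+1) u i = \prod_(0 <= i < n.+1) U i.
  by rewrite big_mkord; apply: eq_bigr => i _; rewrite /U inord_val.
rewrite (big_cat_nat (leq0n j) jn) (big_cat_nat (leq0n j) (leqW jn)) /=.
rewrite (big_ltn (ltn_ord j)) big_add1 /=.
have -> : \prod_(0 <= i < j) U (bump j i) = \prod_(0 <= i < j) U i.
  by apply: eq_big_nat => i /andP[_ ij]; rewrite /bump leqNgt ij add0n.
have -> : \prod_(j <= i < n) U (bump j i) = \prod_(j <= i < n) U i.+1.
  by apply: eq_big_nat => i /andP[ji _]; rewrite /bump ji add1n.
have -> : u j = U j by rewrite /U inord_val.
rewrite mulrA (@commute_prod (U j) (B j) U B j (hU j) hU) -scalerAl -!mulrA.
congr (_ *: _).
rewrite (big_ord_narrow (F := fun x : 'I_n => sgn (b j * b (lift j x)))) //.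
rewrite big_mkord; apply: eq_bigr => i _; rewrite /B inord_val liftE.
by rewrite /= /bump leqNgt ltn_ord add0n.
Qed.

Lemma prod_perm N (u : 'I_N -> A) (b : 'I_N -> nat) :
  (forall i, u i \in hom (b i)) ->
  forall s : 'S_N, \prod_i u (s i) = kos b s *: \prod_i u i.
Proof.
elim: N u b => [|n IH] u b hu s.
  by rewrite !big_ord0 /koszul big_ord0 scale1r.
have [t ->] := perm_lift_dec s.
set j := s ord0.
rewrite koszul_lift big_ord_recl lift_perm_id.
rewrite (eq_bigr (fun i => u (lift j (t i)))); last by move=> i _; rewrite lift_perm_lift.
rewrite (IH (fun i => u (lift j i)) (fun i => b (lift j i))) //.
by rewrite -scalerAr (insert_prod (b := b)) // scalerA mulrC.
Qed.


Lemma hom_prod N (u : 'I_N -> A) (b : 'I_N -> nat) :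
  (forall i, u i \in hom (b i)) -> \prod_i u i \in hom (\sum_i b i)%N.
Proof.
elim: N u b => [|N IH] u b hu; first by rewrite !big_ord0 hom1.
by rewrite !big_ord_recl homM // IH.
Qed.

Lemma lift_eqF n (h : 'I_n) (i : 'I_n.-1) : (lift h i == h) = false.
Proof. by apply/negbTE; rewrite eq_sym neq_lift. Qed.

Definition SP N (i : 'I_N) (x : A) (w : 'I_N -> A) :=
  \prod_(p < N) (if p == i then x else w p).

Lemma SP_lin N i (c : R) x y w :
  @SP N i (c *: x + y) w = c *: SP i x w + SP i y w.
Proof.
elim: N i w => [|N IH] i w; first by case: i.
rewrite /SP !big_ord_recl.
case: (unliftP ord0 i) => [i'|] ->.
  have F : (ord0 == lift ord0 i') = false by apply/negbTE; exact: neq_lift.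
  rewrite !F.
  have E z : \prod_(q < N) (if lift ord0 q == lift ord0 i' then z else w (lift ord0 q))
     = SP i' z (fun q => w (lift ord0 q)).
    by apply: eq_bigr => q _; rewrite (inj_eq lift_inj).
  by rewrite !E IH mulrDr scalerAr.
rewrite eqxx.
have E z : \prod_(q < N) (if lift ord0 q == ord0 then z else w (lift ord0 q))
     = \prod_(q < N) w (lift ord0 q).
  by apply: eq_bigr => q _; rewrite ?lift_eqF.
rewrite (E (c *: x + y)) mulrDl -scalerAl; congr (_ *: _ + _); by rewrite ?E.
Qed.

Lemma SPD N i x y w : @SP N i (x + y) w = SP i x w + SP i y w.
Proof. by have := SP_lin i 1 x y w; rewrite !scale1r. Qed.

Lemma SP0 N i w : @SP N i 0 w = 0.
Proof.
have := SP_lin i (-1) 0 0 w; rewrite scaler0 addr0 scaleN1r.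
by rewrite addNr.
Qed.

Lemma SPZ N i c x w : @SP N i (c *: x) w = c *: SP i x w.
Proof. by rewrite -[c *: x]addr0 SP_lin SP0 addr0. Qed.

Lemma leib_prod (dl : A -> A) :
  (forall p x y, x \in hom p -> dl (x * y) = dl x * y + sgn p *: (x * dl y)) ->
  forall N (u : 'I_N -> A) (b : 'I_N -> nat), (forall i, u i \in hom (b i)) ->
  dl (\prod_i u i) =
  \sum_(i < N) sgn (\sum_(p < N | (p < i)%N) b p) *: SP i (dl (u i)) u.
Proof.
move=> hL; have dl1 : dl 1 = 0.
  have := hL 0%N 1 1 (hom1 D); rewrite !mulr1 expr0 scale1r mul1r => h.
  by have := congr1 (fun z => z - dl 1) h; rewrite /= subrr addrK => <-.
elim=> [|N IH] u b hu; first by rewrite !big_ord0.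
rewrite big_ord_recl (hL _ _ _ (hu ord0)) (IH _ (fun i => b (lift ord0 i))) //.
rewrite big_ord_recl /SP big_ord_recl eqxx /=.
have -> : \sum_(p < N.+1 | (p < 0)%N) b p = 0 by rewrite big_pred0.
rewrite expr0 scale1r; congr (_ * _ + _).
rewrite mulr_sumr scaler_sumr; apply: eq_bigr => i _.
rewrite big_ord_recl /=.
rewrite [\sum_(p < N.+1 | _) _]big_mkcond big_ord_recl /= -big_mkcond /=.
rewrite exprD -scalerA -scalerAr; congr (_ *: _).
Qed.

End Alg.

Section Main.
Variables (R : numFieldType) (A : algType R) (D : cforms A) (n : nat).
Local Notation sgn e := ((-1 : R) ^+ e).
Local Notation kos := (koszul R).
Local Notation hom := (homog D).
Local Notation N := n.+2.

Definition opj (j : nat) (p : 'I_N) (x : A) :=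
  if p == ord0 then x else if (p <= j)%N then del D x else delb D x.
Definition bw (ka : 'I_N -> nat) (p : 'I_N) := if p == ord0 then ka p else (ka p).+1.
Definition Pj (j : nat) (f : 'I_N -> A) :=
  \prod_(p < N) (if (p < j)%N then del D (f p) else delb D (f p)).
Definition Qj (j : nat) (f : 'I_N -> A) :=
  \prod_(p < N) (if p == ord0 then delb D (f p)
                 else if (p <= j)%N then del D (f p) else delb D (f p)).
Definition Lij (i : 'I_N) (j : nat) (f : 'I_N -> A) :=
  SP i (delb D (del D (f i))) (fun p => opj j p (f p)).

Lemma dtot_ot (f : 'I_N -> A) (ka : 'I_N -> nat) (hf : forall i, f i \in hom (ka i)) j :
  dtot D (omega_term D j f) = Pj j.+1 f + Qj j f +
    \sum_(i < N | i != ord0) sgn (\sum_(p < N | (p < i)%N) bw ka p) *: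
        ((if (i <= j)%N then 1 else -1) *: Lij i j f).
Proof.
have hu p : opj j p (f p) \in hom (bw ka p).
  rewrite /opj /bw; case: (p == ord0) => //.
  by case: (p <= j)%N; [apply: del_hom | apply: delb_hom].
have -> : omega_term D j f = \prod_p opj j p (f p) by [].
rewrite /dtot (leib_prod (del_leibniz (c:=D)) hu) (leib_prod (delb_leibniz (c:=D)) hu).
rewrite -big_split /= (bigD1 ord0) //=.
have -> : \sum_(p < N | (p < @ord0 n.+1)%N) bw ka p = 0 by rewrite big_pred0.
rewrite expr0 !scale1r; congr (_ + _).
  congr (_ + _); apply: eq_bigr => p _; rewrite /opj;
    case: (p =P ord0) => [->|/eqP np] //=; by rewrite ltnS.
apply: eq_bigr => i ni; rewrite -scalerDr -SPD /Lij; congr (_ *: _); rewrite -SPZ; congr (SP _ _ _).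
rewrite /opj (negbTE ni); case: (i <= j)%N.
  by rewrite del_del add0r scale1r.
have := del_delb D (f i); rewrite delb_delb addr0 => /eqP; rewrite addr_eq0 => /eqP ->.
by rewrite scaleN1r.
Qed.


Lemma prod_lt_lift (F : 'I_N -> R) (i : 'I_N) :
  \prod_(p < N | (p < i)%N) F p = \prod_(y < n.+1 | (y < i)%N) F (lift i y).
Proof.
have h1 : (i <= N)%N by apply: ltnW.
have h2 : (i <= n.+1)%N by rewrite -ltnS.
rewrite (big_ord_narrow h1) (big_ord_narrow h2); apply: eq_bigr => y _.
congr F; apply: val_inj; by rewrite /= /bump leqNgt ltn_ord add0n.
Qed.

Lemma sgn_eq (m m' : nat) : odd m = odd m' -> sgn m = sgn m'.
Proof. by move=> h; rewrite -[LHS]signr_odd h signr_odd. Qed.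

Definition jp (i : 'I_N) (j : nat) := if (i <= j)%N then j.-1 else j.

Lemma sign_key (ka : 'I_N -> nat) (i : 'I_N) (i0 : i != ord0) (j : nat) :
  let c := lift_perm ord0 i 1 in
  sgn j * (sgn (\sum_(p < N | (p < i)%N) bw ka p) * (if (i <= j)%N then 1 else -1)) =
  kos (fun p => (ka p).+1) c *
   (sgn (ka i) * (sgn (jp i j) *
     kos (fun p => if p == i then (ka p).+2 else bw ka p) c)).
Proof.
move=> c; rewrite /c !koszul_lift !koszul1 !mulr1 eqxx.
have ipos : (0 < i)%N by rewrite lt0n.
have Ei : forall y : 'I_n.+1, (lift i y == i) = false by move=> y; rewrite lift_eqF.
set Pa := \prod_(x < n.+1 | _) _.
set Pb := \prod_(x < n.+1 | _) _.
have PaPb : Pa * Pb = (\prod_(y < n.+1 | (y < i)%N) sgn (bw ka (lift i y))) * sgn (ka i).+1.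
  rewrite /Pa /Pb -big_split /=.
  have -> : \prod_(y < n.+1 | (y < i)%N) (sgn ((ka i).+1 * (ka (lift i y)).+1) *
         sgn ((ka i).+2 * (if lift i y == i then (ka (lift i y)).+2 else bw ka (lift i y))))
     = \prod_(y < n.+1 | (y < i)%N) (sgn (bw ka (lift i y)) *
           (if y == ord0 then sgn (ka i).+1 else 1)).
    apply: eq_bigr => y _; rewrite Ei /bw.
    have -> : (lift i y == ord0) = (y == ord0).
      apply/eqP/eqP => [e|->]; last by apply: val_inj; rewrite /= /bump leqNgt ipos.
      apply: val_inj; move: (congr1 val e); rewrite /= /bump.
      by case: (i <= y)%N; rewrite ?add1n ?add0n.
    move: (ka i) (ka (lift i y)) => x z.
    case: (y == ord0); rewrite ?mulr1 -!exprD; apply: sgn_eq;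
      rewrite /= !oddD !oddM /= ?oddD ?oddM; by case: (odd x); case: (odd z).
  rewrite big_split /=; congr (_ * _).
  rewrite (bigD1 ord0) //= big1 ?mulr1 // => y /andP[_ /negbTE ->] //.
rewrite -(prodrXr (-1 : R)) prod_lt_lift.
set P := \prod_(y < n.+1 | _) _ in PaPb *.
rewrite [RHS]mulrCA [Pa * _]mulrCA PaPb exprS.
have aux (y z : R) : y * y = 1 -> y * (z * (P * (-1 * y))) = - (z * P).
  move=> yy; rewrite mulN1r !mulrN; congr (- _).
  by rewrite mulrCA [y * (P * y)]mulrCA yy mulr1.
rewrite aux ?sgn_sq // /jp; case: (leqP i j) => ij.
  have : (0 < j)%N by apply: leq_trans ij.
  by case: j ij => // j ij _ /=; rewrite exprS mulr1 mulN1r mulNr.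
by rewrite mulrN1 mulrN.
Qed.


Lemma lift_eq0 (i : 'I_N) (y : 'I_n.+1) : (0 < i)%N -> (lift i y == ord0) = (y == ord0).
Proof.
move=> ipos; apply/eqP/eqP => [e|->]; last by apply: val_inj; rewrite /= /bump leqNgt ipos.
apply: val_inj; move: (congr1 val e); rewrite /= /bump.
by case: (i <= y)%N; rewrite ?add1n ?add0n.
Qed.

Lemma lift_le_jp (i : 'I_N) (q : 'I_n.+1) (j : nat) : (0 < i)%N ->
  (lift i q <= j)%N = (q <= jp i j)%N.
Proof.
move=> ipos; rewrite /= /bump /jp; case: (leqP i q) => iq; case: (leqP i j) => ij.
- case: j ij => [|j] ij; first by move: (leq_trans ipos ij).
  by rewrite add1n ltnS.
- have jq : (j < q)%N := leq_trans ij iq.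
  by rewrite add1n ltnNge ltnW // leqNgt jq.
- have qj : (q < j)%N := leq_trans iq ij.
  case: j ij qj => [|j] ij qj //=; rewrite -[(q <= j)%N]ltnS qj; exact: ltnW.
- by [].
Qed.

Variables (k : 'I_N -> nat) (phi : 'I_N -> A) (hphi : forall i, phi i \in hom (k i)).
Definition aa : 'I_N -> nat := fun i => (k i).+1.

Lemma QP (j : 'I_N) :
  \sum_(s : 'S_N) kos aa s *: Qj j (fun p => phi (s p)) =
  \sum_(s : 'S_N) kos aa s *: Pj j (fun p => phi (s p)).
Proof.
rewrite (reindex_inj (mulgI (lift_perm ord0 j 1))) /=.
apply: eq_bigr => s _.
set c := lift_perm ord0 j 1.
pose u (p : 'I_N) := if (p < j)%N then del D (phi (s p)) else delb D (phi (s p)).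
have E : Qj j (fun p => phi ((c * s)%g p)) = \prod_p u (c p).
  rewrite /Qj big_ord_recl [RHS]big_ord_recl; congr (_ * _).
    by rewrite /u permM lift_perm_id ltnn.
  apply: eq_bigr => q _; rewrite /u permM lift_perm_lift perm1 ltn_lift_l /=.
  by rewrite /bump add1n.
have hu (p : 'I_N) : u p \in hom (aa (s p)).
  by rewrite /u; case: (p < j)%N; [apply: del_hom | apply: delb_hom].
rewrite E (prod_perm hu) koszulM scalerA -mulrA koszul_sq mulr1.
by [].
Qed.


Definition Zm (j' : nat) (f : 'I_N -> A) :=
  delb D (del D (f ord0)) * omega_term D j' (fun q : 'I_n.+1 => f (lift ord0 q)).

Definition Zs (j' : nat) :=
  \sum_(s : 'S_N) kos aa s *: (sgn (k (s ord0)) *: (sgn j' *: Zm j' (fun p => phi (s p)))).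

Lemma key (i : 'I_N) (i0 : i != ord0) (j : 'I_N) :
  \sum_(s : 'S_N) kos aa s *: (sgn j *:
     (sgn (\sum_(p < N | (p < i)%N) bw (fun p => k (s p)) p) *:
       ((if (i <= j)%N then 1 else -1) *: Lij i j (fun p => phi (s p))))) = Zs (jp i j).
Proof.
have ipos : (0 < i)%N by rewrite lt0n.
rewrite /Zs [RHS](reindex_inj (mulgI (lift_perm ord0 i 1))) /=.
apply: eq_bigr => s _.
set c := lift_perm ord0 i 1.
pose u (p : 'I_N) := if p == i then delb D (del D (phi (s p))) else opj j p (phi (s p)).
pose bL (p : 'I_N) := if p == i then (k (s p)).+2 else bw (fun p => k (s p)) p.
have E : Zm (jp i j) (fun p => phi ((c * s)%g p)) = \prod_p u (c p).
  rewrite /Zm /omega_term [RHS]big_ord_recl; congr (_ * _).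
    by rewrite /u !permM lift_perm_id eqxx.
  apply: eq_bigr => q _; rewrite /u !permM lift_perm_lift perm1 lift_eqF /opj.
  by rewrite lift_eq0 // lift_le_jp.
have hu (p : 'I_N) : u p \in hom (bL p).
  rewrite /u /bL; case: (p == i); first by apply: delb_hom; apply: del_hom.
  rewrite /opj /bw; case: (p == ord0) => //.
  by case: (p <= j)%N; [apply: del_hom | apply: delb_hom].
have EL : \prod_p u p = Lij i j (fun p => phi (s p)).
  by rewrite /Lij /SP; apply: eq_bigr => p _; rewrite /u; case: (p =P i) => [->|].
rewrite E (prod_perm hu) EL koszulM permM lift_perm_id !scalerA; congr (_ *: _).
rewrite -!mulrA; congr (_ * _).
exact: (sign_key (fun p => k (s p)) i0 j).
Qed.


Lemma telescope_sgn (g : nat -> A) m :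
  \sum_(j < m) sgn j *: (g j.+1 + g j) = g 0%N - sgn m *: g m.
Proof.
elim: m => [|m IH]; first by rewrite big_ord0 expr0 scale1r subrr.
rewrite big_ord_recr /= IH scalerDr exprS mulN1r scaleNr opprK.
by rewrite addrCA subrK addrC.
Qed.

Lemma TPfull (u : 'I_N -> A) : (forall p, u p \in hom (aa p)) ->
  \sum_(s : 'S_N) kos aa s *: \prod_p u (s p) = (N`!)%:R *: \prod_p u p.
Proof.
move=> hu; transitivity (\sum_(s : 'S_N) \prod_p u p).
  by apply: eq_bigr => s _; rewrite (prod_perm hu) scalerA koszul_sq scale1r.
by rewrite sumr_const card_Sn scaler_nat.
Qed.

Lemma count_jp (Z : nat -> A) :
  \sum_(i < N | i != ord0) \sum_(j < N) Z (jp i j) = (\sum_(j' < n.+1) Z j') *+ N.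
Proof.
rewrite big_mkcond big_ord_recl /= add0r.
have inner (q : 'I_n.+1) : \sum_(j < N) Z (jp (lift ord0 q) j) = \sum_(j' < n.+1) Z j' + Z q.
  have qn : (q <= n.+1)%N by apply: ltnW.
  rewrite /jp /= /bump /= add1n.
  rewrite -(big_mkord xpredT (fun j => Z (if (q < j)%N then j.-1 else j))).
  rewrite -(big_mkord xpredT Z).
  rewrite (big_cat_nat (leq0n q.+1) (leqW (ltn_ord q))) /=.
  rewrite (big_cat_nat (leq0n q) qn) /= big_add1 /= big_nat_recr //=.
  rewrite (eq_big_nat _ _ (F1 := fun j => Z (if (q < j)%N then j.-1 else j)) (F2 := Z)); last first.
    by move=> j /andP[_ h]; rewrite ltnNge ltnW.
  rewrite (eq_big_nat _ _ (F1 := fun j => Z (if (q < j.+1)%N then j else j.+1)) (F2 := Z)); last first.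
    by move=> j /andP[h _]; rewrite ltnS h.
  by rewrite ltnn addrAC.
rewrite (eq_bigr (fun q : 'I_n.+1 => \sum_(j' < n.+1) Z j' + Z q)); last first.
  by move=> q _; rewrite inner.
by rewrite big_split /= sumr_const card_ord -mulrSr.
Qed.

Lemma dtotZ (c : R) x : dtot D (c *: x) = c *: dtot D x.
Proof. by rewrite /dtot !linearZ scalerDr. Qed.

Lemma dtot_sum (I : finType) (F : I -> A) : dtot D (\sum_i F i) = \sum_i dtot D (F i).
Proof. by rewrite /dtot !raddf_sum -big_split. Qed.


Lemma omega_term_ext m (g1 g2 : 'I_m.+1 -> A) j :
  (forall q, g1 q = g2 q) -> omega_term D j g1 = omega_term D j g2.
Proof. by move=> e; apply: eq_bigr => q _; rewrite e. Qed.

Lemma fact_neq0 m : (m`!)%:R != 0 :> R.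
Proof. by rewrite pnatr_eq0 -lt0n fact_gt0. Qed.

Lemma collapse :
  Alt (fun k' f => sgn (k' ord0) *:
        (delb D (del D (f ord0)) *
         omega D (fun i : 'I_n.+1 => k' (lift ord0 i)) (fun i : 'I_n.+1 => f (lift ord0 i))))
      k phi = \sum_(j' < n.+1) Zs j'.
Proof.
pose X (s : 'S_N) := delb D (del D (phi (s ord0))).
pose W (g : 'I_n.+1 -> A) := \sum_(j' < n.+1) sgn j' *: omega_term D j' g.
pose G (s : 'S_N) := kos aa s *: (sgn (k (s ord0)) *: (X s * W (fun q => phi (s (lift ord0 q))))).
have RZ : \sum_(j' < n.+1) Zs j' = \sum_s G s.
  rewrite /Zs exchange_big /=; apply: eq_bigr => s _.
  rewrite /G /W /Zm mulr_sumr !scaler_sumr; apply: eq_bigr => j _.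
  by rewrite scalerAr.
have GL (t : 'S_n.+1) (s : 'S_N) : G (lift_perm ord0 ord0 t * s)%g =
    kos aa s *: (kos (fun i => aa (s (lift ord0 i))) t *:
      (sgn (k (s ord0)) *: (X s * W (fun q => phi (s (lift ord0 (t q))))))).
  rewrite /G koszulM koszul_lift big1 ?mul1r; last by move=> x; rewrite ltn0.
  rewrite -scalerA /X permM lift_perm_id; congr (_ *: (_ *: (_ *: (_ * _)))).
  apply: eq_bigr => j _; congr (_ *: _); apply: omega_term_ext => q.
  by rewrite permM lift_perm_lift.
have LT (s : 'S_N) :
  koszul R (fun i => (k i).+1) s *: (sgn (k (s ord0)) *:
        (delb D (del D (phi (s ord0))) *
         omega D (fun i : 'I_n.+1 => k (s (lift ord0 i))) (fun i : 'I_n.+1 => phi (s (lift ord0 i)))))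
  = ((n.+1)`!%:R)^-1 *: \sum_(t : 'S_n.+1) G (lift_perm ord0 ord0 t * s)%g.
  rewrite (eq_bigr _ (fun t _ => GL t s)).
  rewrite /omega /Alt -scalerAr mulr_sumr !scaler_sumr; apply: eq_bigr => t _.
  rewrite -scalerAr !scalerA /X /W; congr (_ *: _).
  by rewrite [RHS]mulrCA mulrACA [RHS]mulrACA; congr (_ * _); exact: mulrC.
rewrite /Alt (eq_bigr _ (fun s _ => LT s)) -scaler_sumr exchange_big /=.
rewrite (eq_bigr (fun _ => \sum_s G s)); last first.
  by move=> t _; rewrite [RHS](reindex_inj (mulgI (lift_perm ord0 ord0 t))).
by rewrite sumr_const card_Sn -scaler_nat scalerA mulVf ?fact_neq0 // scale1r RZ.
Qed.


Definition TP j := \sum_(s : 'S_N) kos aa s *: Pj j (fun p => phi (s p)).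

Lemma S1E :
  \sum_(s : 'S_N) kos aa s *: \sum_(j < N) sgn j *:
      (Pj j.+1 (fun p => phi (s p)) + Qj j (fun p => phi (s p)))
  = (N`!)%:R *: (sgn n.+1 *: \prod_(i < N) del D (phi i) + \prod_(i < N) delb D (phi i)).
Proof.
transitivity (\sum_(j < N) sgn j *: (TP j.+1 + TP j)).
  under eq_bigr do rewrite scaler_sumr.
  rewrite exchange_big /=; apply: eq_bigr => j _.
  rewrite /TP -QP -big_split scaler_sumr; apply: eq_bigr => s _.
  by rewrite /= -scalerDr !scalerA mulrC.
rewrite (telescope_sgn TP).
have T0 : TP 0%N = (N`!)%:R *: \prod_(i < N) delb D (phi i).
  rewrite -(TPfull (u := fun p => delb D (phi p))); last by move=> p; apply: delb_hom.
  by apply: eq_bigr => s _.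
have TN : TP N = (N`!)%:R *: \prod_(i < N) del D (phi i).
  rewrite -(TPfull (u := fun p => del D (phi p))); last by move=> p; apply: del_hom.
  apply: eq_bigr => s _; congr (_ *: _); apply: eq_bigr => p _; by rewrite ltn_ord.
rewrite T0 TN exprS mulN1r scaleNr opprK scalerDr addrC !scalerA mulrC.
by [].
Qed.

Lemma S2E :
  \sum_(s : 'S_N) kos aa s *: \sum_(j < N) sgn j *:
    \sum_(i < N | i != ord0) sgn (\sum_(p < N | (p < i)%N) bw (fun p => k (s p)) p) *:
        ((if (i <= j)%N then 1 else -1) *: Lij i j (fun p => phi (s p)))
  = (\sum_(j' < n.+1) Zs j') *+ N.
Proof.
rewrite -count_jp.
under eq_bigr => s _ do rewrite scaler_sumr.
under eq_bigr => s _ do under eq_bigr => j _ do rewrite !scaler_sumr.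
rewrite exchange_big /=.
under eq_bigr => j _ do rewrite exchange_big /=.
rewrite exchange_big /=.
apply: eq_bigr => i i0; apply: eq_bigr => j _.
rewrite -key //; apply: eq_bigr => s _; by rewrite scalerA.
Qed.

End Main.

Unset Implicit Arguments.

Theorem lemma2p1 (R : numFieldType) (A : algType R) (D : cforms A) (n : nat)
    (k : 'I_n.+2 -> nat) (phi : 'I_n.+2 -> A)
    (hphi : forall i, phi i \in homog D (k i)) :
  dtot D (omega D k phi) =
    (-1) ^+ n.+1 *: (\prod_(i < n.+2) del D (phi i))
    + \prod_(i < n.+2) delb D (phi i)
    + ((n.+1)`!%:R)^-1 *:
        Alt (fun k' f =>
               (-1) ^+ (k' ord0) *:
                 (delb D (del D (f ord0)) *
                  omega D (fun i : 'I_n.+1 => k' (lift ord0 i))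
                          (fun i : 'I_n.+1 => f (lift ord0 i))))
            k phi.
Proof.
rewrite (collapse D k phi).
rewrite {1}/omega dtotZ /Alt dtot_sum.
under eq_bigr => s _ do rewrite dtotZ dtot_sum.
under eq_bigr => s _ do under eq_bigr => j _ do
  rewrite dtotZ (dtot_ot (fun p => hphi (s p))).
under eq_bigr => s _ do under eq_bigr => j _ do rewrite scalerDr.
under eq_bigr => s _ do rewrite big_split /= scalerDr.
rewrite big_split /=.
rewrite (S1E hphi) (S2E hphi) scalerDr scalerA mulVf ?fact_neq0 // scale1r.
congr (_ + _); rewrite -scaler_nat scalerA; congr (_ *: _).
rewrite factS natrM invfM mulrAC mulVf ?mul1r //.
by rewrite pnatr_eq0.
Qed.
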